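(* Let $r\geq 1$, let $\mathbf a=(a_1,\ldots,a_r)$ be positive integers, and let $D$ be a positive common multiple of $a_1,\ldots,a_r$. Then for every integer $n\geq 0$, $$p_{\mathbf a}(n) = \sum_{j=0}^{\lfloor n/D\rfloor} \binom{r+j-1}{j} f_{\mathbf a}(n-jD).$$
   Context: $p_{\mathbf a}(n)$ is the restricted partition function: the number of integer solutions $(x_1,\ldots,x_r)$ of $a_1x_1+\cdots+a_rx_r=n$ with all $x_i\geq 0$. For $n\geq 0$, $f_{\mathbf a}(n)$ denotes the number of integer tuples $(j_1,\ldots,j_r)$ with $a_1j_1+\cdots+a_rj_r=n$ and $0\leq j_k\leq \frac{D}{a_k}-1$ for $1\leq k\leq r$. *)

(* Defs.v *)
From mathcomp Require Import all_boot.
Set Implicit Arguments. Unset Strict Implicit. Unset Printing Implicit Defensive.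

(* Each x_i ranges over 'I_(n.+1), i.e. 0 <= x_i <= n;
   this is no restriction when all a_i >= 1 (since a_i x_i <= n forces x_i <= n). *)
Definition rpart {r : nat} (a : 'I_r -> nat) (n : nat) : nat :=
  #|[set x : {ffun 'I_r -> 'I_n.+1} | \sum_(i < r) a i * x i == n]|.

(* f_a(n): number of (j_1..j_r) with sum a_k j_k = n and 0 <= j_k <= D/a_k - 1,
   i.e. j_k < D %/ a_k (D is a multiple of each a_k, so D/a_k is an integer <= D). *)
Definition fpart {r : nat} (a : 'I_r -> nat) (D n : nat) : nat :=
  #|[set j : {ffun 'I_r -> 'I_D.+1} |
      [forall k, j k < D %/ a k] && (\sum_(k < r) a k * j k == n)]|.

(* Main.v *)
Require Import Defs.
From mathcomp Require Import all_boot.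
Set Implicit Arguments. Unset Strict Implicit. Unset Printing Implicit Defensive.

Lemma card_ffun_part r m :
  #|[set q : {ffun 'I_r.+1 -> 'I_m.+1} | \sum_i (q i : nat) == m]| = 'C(r + m, r).
Proof.
rewrite -card_ord_partitions -!sum1dep_card.
rewrite (reindex (fun t : r.+1.-tuple 'I_m.+1 => [ffun i => tnth t i])) /=.
  apply: eq_bigl => t; rewrite big_tuple; congr (_ == _).
  by apply: eq_bigr => i _; rewrite ffunE.
exists (fun q : {ffun 'I_r.+1 -> 'I_m.+1} => [tuple q i | i < r.+1]) => /= [t _|q _].
  by apply: eq_from_tnth => i; rewrite tnth_mktuple ffunE.
by apply/ffunP => i; rewrite ffunE tnth_mktuple.
Qed.
Section Main.
Variables (r : nat) (a : 'I_r.+1 -> nat) (D : nat).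
Hypotheses (apos : forall i, 0 < a i) (Dpos : 0 < D) (adiv : forall i, a i %| D).

Definition b i := D %/ a i.

Lemma abD i : a i * b i = D.
Proof. by rewrite mulnC divnK. Qed.

Lemma bpos i : 0 < b i.
Proof. have := abD i; case: (b i) => //; rewrite muln0 => D0; move: Dpos; rewrite -D0. done. Qed.

Lemma bleD i : b i <= D.
Proof. exact: leq_div. Qed.

Lemma divmod q j d : j < d -> (q * d + j) %/ d = q /\ (q * d + j) %% d = j.
Proof.
move=> jd; have d0 : 0 < d by apply: leq_ltn_trans jd.
by rewrite divnMDl // divn_small // addn0 modnMDl modn_small.
Qed.

Lemma term_le (F : 'I_r.+1 -> nat) i : F i <= \sum_k F k.
Proof. by rewrite (bigD1 i) //= leq_addr. Qed.

Definition Qset m := [set q : {ffun 'I_r.+1 -> 'I_m.+1} | \sum_i (q i : nat) == m].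
Definition Fset k := [set j : {ffun 'I_r.+1 -> 'I_D.+1} |
      [forall k, j k < D %/ a k] && (\sum_(k < r.+1) a k * j k == k)].
Definition Xset n m := [set x : {ffun 'I_r.+1 -> 'I_n.+1} |
      (\sum_i a i * x i == n) && (\sum_i (x i %/ b i) == m)].

Lemma sum_split (q j : 'I_r.+1 -> nat) :
  \sum_i a i * (q i * b i + j i) = (\sum_i q i) * D + \sum_i a i * j i.
Proof.
rewrite big_distrl /= -big_split /=; apply: eq_bigr => i _.
by rewrite mulnDr mulnCA abD.
Qed.

Lemma key n m : m * D <= n -> #|Xset n m| = #|Qset m| * #|Fset (n - m * D)|.
Proof.
move=> mDn; rewrite -cardsX.
pose phi (p : {ffun 'I_r.+1 -> 'I_m.+1} * {ffun 'I_r.+1 -> 'I_D.+1}) :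
  {ffun 'I_r.+1 -> 'I_n.+1} := [ffun i => inord (p.1 i * b i + p.2 i)].
have Hsum q j : q \in Qset m -> j \in Fset (n - m * D) ->
    \sum_i a i * (q i * b i + j i) = n.
  rewrite !inE => /eqP qs /andP[_ /eqP js].
  by rewrite (sum_split (fun i => q i) (fun i => j i)) qs js subnKC.
have Hbnd q j i : q \in Qset m -> j \in Fset (n - m * D) -> q i * b i + j i <= n.
  move=> Hq Hj; rewrite -{1}(Hsum q j Hq Hj).
  apply: leq_trans (term_le (fun i => a i * (q i * b i + j i)) i).
  by rewrite leq_pmull.
have Hjb j i : j \in Fset (n - m * D) -> j i < b i.
  by rewrite inE => /andP[/forallP H _]; apply: H.
rewrite -(card_in_imset (f := phi)); last first.
  move=> [q1 j1] [q2 j2]; rewrite !in_setX /= => /andP[Hq1 Hj1] /andP[Hq2 Hj2] E.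
  have E' i : q1 i * b i + j1 i = q2 i * b i + j2 i.
    have := congr1 (fun f : {ffun 'I_r.+1 -> 'I_n.+1} => val (f i)) E; rewrite /phi !ffunE /=.
    by rewrite !inordK // ltnS ?Hbnd.
  congr pair; apply/ffunP => i; apply: val_inj.
    by rewrite /= -(proj1 (divmod (q1 i) (Hjb _ i Hj1))) E' (proj1 (divmod (q2 i) (Hjb _ i Hj2))).
  by rewrite /= -(proj2 (divmod (q1 i) (Hjb _ i Hj1))) E' (proj2 (divmod (q2 i) (Hjb _ i Hj2))).
apply: eq_card => x; apply/idP/imsetP.
  rewrite inE => /andP[/eqP xs /eqP xq].
  have xle i : x i <= n.
    have := term_le (fun i => a i * x i) i; rewrite /= xs => H.
    by apply: leq_trans H; rewrite leq_pmull.
  have qle i : x i %/ b i <= m.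
    by rewrite -xq (term_le (fun i => x i %/ b i) i).
  have jle i : x i %% b i <= D.
    by apply: leq_trans (bleD i); apply: ltnW; rewrite ltn_mod bpos.
  exists ([ffun i => inord (x i %/ b i)], [ffun i => inord (x i %% b i)]).
    rewrite !inE /=; apply/andP; split.
      apply/eqP; apply: etrans _ xq; apply: eq_bigr => i _.
      by rewrite ffunE inordK // ltnS.
    apply/andP; split.
      by apply/forallP => i; rewrite ffunE inordK ?ltnS // ltn_mod bpos.
    have := sum_split (fun i => x i %/ b i) (fun i => x i %% b i).
    under eq_bigr do rewrite -divn_eq.
    rewrite xq => H; apply/eqP; apply/(@addnI (m * D)); rewrite subnKC //.
    apply: etrans _ xs; rewrite H; congr (_ + _); apply: eq_bigr => i _.
    by rewrite ffunE inordK // ltnS.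
  apply/ffunP => i; apply: val_inj; rewrite /phi !ffunE /= !inordK ?ltnS //.
    by rewrite -divn_eq.
  by rewrite -divn_eq.
move=> [[q j]]; rewrite in_setX /= => /andP[Hq Hj] ->.
have ev i : val (phi (q, j) i) = q i * b i + j i.
  by rewrite /phi ffunE /= inordK // ltnS Hbnd.
rewrite inE; apply/andP; split.
  apply/eqP; apply: etrans _ (Hsum q j Hq Hj); apply: eq_bigr => i _; by rewrite ev.
move: Hq; rewrite inE => /eqP Hq; apply/eqP; apply: etrans _ Hq; apply: eq_bigr => i _.
by rewrite ev; case: (divmod (q i) (Hjb j i Hj)).
Qed.

End Main.

Theorem proposition2p2 (r : nat) (a : 'I_r -> nat) (D : nat) :
  1 <= r ->
  (forall i, 0 < a i) ->
  0 < D ->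
  (forall i, a i %| D) ->
  forall n : nat,
    rpart a n =
    \sum_(0 <= j < (n %/ D).+1) 'C(r + j - 1, j) * fpart a D (n - j * D).
Proof.
move=> r1 apos Dpos adiv n.
case: r a apos adiv r1 => // r a apos adiv _.
rewrite /rpart.
transitivity (\sum_(m < (n %/ D).+1) #|Xset a D n m|).
  rewrite -sum1dep_card (partition_big
    (fun x : {ffun 'I_r.+1 -> 'I_n.+1} => (inord (\sum_i (x i %/ b a D i)) : 'I_(n %/ D).+1)) xpredT) //=.
  apply: eq_bigr => m _; rewrite /Xset -sum1dep_card; apply: eq_bigl => x.
  case E: (\sum_i a i * x i == n) => //=.
  have QD : \sum_i (x i %/ b a D i) <= n %/ D.
    rewrite leq_divRL //; apply: leq_trans _ (eq_leq (eqP E)).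
    rewrite big_distrl /=; apply: leq_sum => i _.
    apply: (leq_trans (_ : _ <= a i * (x i %/ b a D i * b a D i))).
      by rewrite mulnCA (abD adiv i).
    by rewrite leq_mul2l leq_divM orbT.
  by apply/eqP/eqP => [<-|H]; [rewrite inordK | apply: val_inj; rewrite /= inordK ?H].
rewrite big_mkord; apply: eq_bigr => m _.
rewrite (key apos Dpos adiv); last by rewrite -leq_divRL // -ltnS.
rewrite /Qset card_ffun_part; congr (_ * _).
rewrite addSn subn1 /=; symmetry; by rewrite -(bin_sub (leq_addl r m)) addnK.
Qed.
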